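(* Let $A\in\mathcal A_n$ and $T=\tau(A)$. For $0\le i<n$, the projective dimension of the simple $A$-module $S_i$ is \[ \operatorname{pdim}(S_i)=\operatorname{dist}_T(i,i+1)-1. \] In particular, $\operatorname{gldim}(A)=\max_{0\le i<n}\operatorname{dist}_T(i,i+1)-1$.
   Context: $K$ is an algebraically closed field. $\mathcal A_n$ is the set of ordered products $A=A_1\times\cdots\times A_k$ of connected linear Nakayama algebras with $n$ simple modules in total. The Kupisch series $[c_0,\dots,c_{n-1}]$ of $A$ is the concatenation of those of the factors, where a connected linear Nakayama algebra with $m$ simple modules has Kupisch series $[c_0,\dots,c_{m-1}]$, $c_i=\dim e_iA$, characterized by $c_{i+1}+1\ge c_i\ge2$ for $0\le i<m-1$ and $c_{m-1}=1$. The simple modules $S_0,\dots,S_{n-1}$ are indexed compatibly with the Kupisch series ($S_i=e_iA/e_iJ$, $J$ the Jacobson radical). $\tau(A)$ is the tree with vertex set $\{0,\dots,n\}$ and an edge between $i+c_i$ and $i$ for each $0\le i<n$; $\operatorname{dist}_T(i,j)$ is the number of edges on the unique path between $i$ and $j$ in $T$. *)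

(* Defs.v *)
From HB Require Import structures.
From mathcomp Require Import all_boot all_order all_algebra.
Set Implicit Arguments. Unset Strict Implicit. Unset Printing Implicit Defensive.
Import GRing.Theory.
Local Open Scope ring_scope.

(* Kupisch series of an element of A_n (a product of connected linear
   Nakayama algebras with n simples in total), given as c : nat -> nat
   with only c 0, ..., c (n-1) relevant.  Concatenating the series of
   the connected factors gives exactly the sequences with
     c_i >= 1, c_i <= c_{i+1} + 1 (i < n-1), c_{n-1} = 1
   (factor boundaries are the positions where c_i = 1). *)
Definition kupisch (n : nat) (c : nat -> nat) : Prop :=
  [/\ forall i, (i < n)%N -> (0 < c i)%N,
      forall i, (i.+1 < n)%N -> (c i <= (c i.+1).+1)%N
    & c n.-1 = 1%N].

(* The tree tau(A): vertices 0..n, edge between i and i + c_i (i < n). *)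
Definition tadj (n : nat) (c : nat -> nat) (u v : nat) : bool :=
  ((u < n)%N && (v == u + c u)%N) || ((v < n)%N && (u == v + c v)%N).

Fixpoint treach (n : nat) (c : nat -> nat) (k u v : nat) : bool :=
  match k with
  | 0 => u == v
  | k'.+1 => has (fun w => tadj n c u w && treach n c k' w v) (iota 0 n.+1)
  end.

(* graph distance (= number of edges of the unique path in the tree);
   the tree has n+1 vertices so the distance is at most n. *)
Definition tdist (n : nat) (c : nat -> nat) (u v : nat) : nat :=
  find (fun k => treach n c k u v) (iota 0 n.+1).

(* Right A-modules (finite dimensional) as representations of the bound
   quiver 0 -> 1 -> ... -> n-1 with relations: every path of length c_i
   starting at i is zero (so dim e_i A = c_i).  Vectors are row vectors,
   V_i = K^(rdim i), and the arrow i -> i+1 acts by v |-> v *m rmap i. *)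
Record rep (K : fieldType) := Rep {
  rdim : nat -> nat ;
  rmap : forall i, 'M[K]_(rdim i, rdim i.+1) }.

Fixpoint pathmx (K : fieldType) (V : rep K) (i k : nat)
  : 'M[K]_(rdim V i, rdim V (k + i)) :=
  match k with
  | 0 => 1%:M
  | k'.+1 => pathmx V i k' *m rmap V (k' + i)
  end.

Definition valid_rep (K : fieldType) (n : nat) (c : nat -> nat) (V : rep K)
  : Prop :=
  (forall i, (n <= i)%N -> rdim V i = 0%N) /\
  (forall i, (i < n)%N -> pathmx V i (c i) = 0).

Definition hom (K : fieldType) (V W : rep K) :=
  forall i, 'M[K]_(rdim V i, rdim W i).

Definition is_hom (K : fieldType) (V W : rep K) (f : hom V W) : Prop :=
  forall i, rmap V i *m f i.+1 = f i *m rmap W i.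

Definition epi (K : fieldType) (V W : rep K) (f : hom V W) : Prop :=
  forall i, row_full (f i).

Definition mono (K : fieldType) (V W : rep K) (f : hom V W) : Prop :=
  forall i, row_free (f i).

Definition exact_at (K : fieldType) (U V W : rep K) (f : hom U V) (g : hom V W)
  : Prop := forall i, (f i == kermx (g i))%MS.

Definition projective (K : fieldType) (n : nat) (c : nat -> nat) (P : rep K)
  : Prop :=
  forall (V W : rep K) (g : hom V W) (h : hom P W),
    valid_rep n c V -> valid_rep n c W -> is_hom g -> epi g -> is_hom h ->
    exists h' : hom P V, is_hom h' /\ forall i, h' i *m g i = h i.

Definition pdim_le (K : fieldType) (n : nat) (c : nat -> nat) (M : rep K)
  (m : nat) : Prop :=
  exists (P : nat -> rep K) (d : forall k, hom (P k.+1) (P k))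
         (eps : hom (P 0%N) M),
    [/\ forall k, (k <= m)%N -> valid_rep n c (P k) /\ projective n c (P k),
        forall k, (k < m)%N -> is_hom (d k),
        [/\ is_hom eps, epi eps & (0 < m)%N -> exact_at (d 0%N) eps],
        forall k, (k.+1 < m)%N -> exact_at (d k.+1) (d k)
      & if m is m'.+1 then mono (d m') else mono eps].

Definition has_pdim (K : fieldType) (n : nat) (c : nat -> nat) (M : rep K)
  (m : nat) : Prop :=
  pdim_le n c M m /\ forall m', pdim_le n c M m' -> (m <= m')%N.

Definition has_gldim (K : fieldType) (n : nat) (c : nat -> nat) (m : nat)
  : Prop :=
  (forall M : rep K, valid_rep n c M -> pdim_le n c M m) /\
  (forall m', (forall M : rep K, valid_rep n c M -> pdim_le n c M m') ->
              (m <= m')%N).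

Definition simple_rep (K : fieldType) (i : nat) : rep K :=
  @Rep K (fun j => nat_of_bool (j == i)) (fun j => 0).

(* Main.v *)
Require Import Defs.
From mathcomp Require Import all_boot all_order all_algebra.
From HB Require Import structures.
From mathcomp Require Import zify.
From Stdlib Require Import ClassicalEpsilon.
Set Implicit Arguments. Unset Strict Implicit. Unset Printing Implicit Defensive.

Module A.
Import GRing.Theory.
Local Open Scope ring_scope.

Section Gen.
Variable K : fieldType.

Lemma mx_dim0 m p (A B : 'M[K]_(m,p)) : (m == 0)%N || (p == 0)%N -> A = B.
Proof.
case/orP=> /eqP E; subst; first by rewrite (flatmx0 A) (flatmx0 B).
by rewrite (thinmx0 A) (thinmx0 B).
Qed.

Lemma pid_eq m p a b : minn a (minn m p) = minn b (minn m p) ->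
  (pid_mx a : 'M[K]_(m,p)) = pid_mx b.
Proof.
move=> E; apply/matrixP=> i j; rewrite !mxE.
case: (i == j :> nat) /eqP => //= e.
have hi : (i < m)%N by [].
have hj : (i < p)%N by rewrite e.
have -> : (i < a)%N = (i < minn a (minn m p))%N by rewrite !leq_min hi hj !andbT.
by rewrite E !leq_min hi hj !andbT.
Qed.

Lemma rank_pid m p a : \rank (pid_mx a : 'M[K]_(m,p)) = minn a (minn m p).
Proof.
rewrite (@pid_eq m p a (minn a (minn m p))); last first.
  lia.
by rewrite rank_pid_mx // ?geq_minr; lia.
Qed.

Lemma mul_pid m p q a b :
  (pid_mx a : 'M[K]_(m,p)) *m (pid_mx b : 'M[K]_(p,q)) = pid_mx (minn p (minn a b)).
Proof. exact: mul_pid_mx. Qed.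

Lemma pid_is0 m p a : minn a (minn m p) = 0%N -> (pid_mx a : 'M[K]_(m,p)) = 0.
Proof. by move=> E; rewrite (@pid_eq m p a 0) ?pid_mx_0 // E; lia. Qed.

Lemma eq_ker_rank m p q (A : 'M[K]_(m,p)) (B : 'M[K]_(p,q)) :
  A *m B = 0 -> (p <= \rank A + \rank B)%N -> (A == kermx B)%MS.
Proof.
move=> AB r; have sAK : (A <= kermx B)%MS by rewrite sub_kermx AB.
apply/andP; split => //.
have [_ <-] := mxrank_leqif_sup sAK.
rewrite eqn_leq mxrankS //= mxrank_ker; lia.
Qed.

Lemma eq_ker_rows m p q (A : 'M[K]_(m,p)) (B : 'M[K]_(p,q)) :
  A *m B = 0 -> (forall w : 'rV_p, w *m B = 0 -> (w <= A)%MS) -> (A == kermx B)%MS.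
Proof.
move=> AB H; apply/andP; split; first by rewrite sub_kermx AB.
by apply/rV_subP => v /sub_kermxP /H.
Qed.

Lemma exact_sub m p q r (A : 'M[K]_(m,p)) (B : 'M[K]_(p,q)) (w : 'M[K]_(r,p)) :
  (A == kermx B)%MS -> w *m B = 0 -> (w <= A)%MS.
Proof. by case/andP=> _ H wB; apply: submx_trans H; apply/sub_kermxP. Qed.

Lemma exact_mul0 m p q (A : 'M[K]_(m,p)) (B : 'M[K]_(p,q)) :
  (A == kermx B)%MS -> A *m B = 0.
Proof. by case/andP=> /sub_kermxP. Qed.

Lemma mono0 m p r (A : 'M[K]_(m,p)) (w : 'M[K]_(r,m)) : row_free A -> w *m A = 0 -> w = 0.
Proof. by move=> fA wA; apply: (row_free_inj fA); rewrite wA mul0mx. Qed.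

Lemma mono_cancel m p r (A : 'M[K]_(m,p)) (w w' : 'M[K]_(r,m)) :
  row_free A -> w *m A = w' *m A -> w = w'.
Proof. by move=> fA; apply: (row_free_inj fA). Qed.

Lemma row_free0 p (A : 'M[K]_(0,p)) : row_free A.
Proof. by rewrite /row_free -leqn0 rank_leq_row. Qed.

Lemma row_full0 p (A : 'M[K]_(p,0)) : row_full A.
Proof. by rewrite /row_full -leqn0 rank_leq_col. Qed.

Lemma ker_free m p q (A : 'M[K]_(m,p)) (B : 'M[K]_(p,q)) :
  A = 0 -> row_free B -> (A == kermx B)%MS.
Proof.
move=> -> fB; apply/andP; split; first by rewrite sub0mx.
by rewrite -kermx_eq0 in fB; rewrite (eqP fB) sub0mx.
Qed.

Fixpoint pm (V : rep K) (a b : nat) : 'M[K]_(rdim V a, rdim V b) :=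
  match b with
  | 0 => pid_mx (rdim V a)
  | b'.+1 => if (a <= b')%N then pm V a b' *m rmap V b' else pid_mx (rdim V a)
  end.

Lemma pm_id V a : pm V a a = 1%:M.
Proof. by case: a => [|a] /=; rewrite ?ltnn pid_mx_1. Qed.

Lemma pmS V a b : (a <= b)%N -> pm V a b.+1 = pm V a b *m rmap V b.
Proof. by move=> h /=; rewrite h. Qed.

Lemma pm_path V a k : pm V a (k + a)%N = pathmx V a k.
Proof.
elim: k => [|k IH]; first by change (pm V a a = 1%:M); rewrite pm_id.
change (pm V a (k + a)%N.+1 = pathmx V a k *m rmap V (k + a)%N).
by rewrite pmS ?leq_addl // IH.
Qed.

Lemma pm_hom V W (f : Defs.hom V W) : is_hom f ->
  forall a b, (a <= b)%N -> pm V a b *m f b = f a *m pm W a b.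
Proof.
move=> hf a; elim=> [|b IH] le.
  by move: le; rewrite leqn0 => /eqP ->; rewrite !pm_id mul1mx mulmx1.
move: le; rewrite leq_eqVlt => /orP [/eqP -> | lt].
  by rewrite !pm_id mul1mx mulmx1.
by rewrite !pmS // -mulmxA hf mulmxA IH // mulmxA.
Qed.

Lemma pm_valid n c V a : valid_rep n c V -> (a < n)%N -> pm V a (c a + a)%N = 0.
Proof. by case=> _ h ha; rewrite pm_path h. Qed.

Lemma pm_trans V a b e : (a <= b)%N -> (b <= e)%N -> pm V a e = pm V a b *m pm V b e.
Proof.
move=> ab; elim: e => [|e IH] be.
  by move: be ab; rewrite leqn0 => /eqP -> ; rewrite leqn0 => /eqP ->; rewrite pm_id mulmx1.
move: be; rewrite leq_eqVlt => /orP [/eqP -> | lt]; first by rewrite pm_id mulmx1.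
by rewrite !pmS // ?IH ?mulmxA //; apply: leq_trans ab _.
Qed.

End Gen.

End A.

Module B.
Import A.
Import GRing.Theory.
Local Open Scope ring_scope.

Section Reps.
Variable K : fieldType.
Variables (n : nat) (c : nat -> nat).
Local Notation valid := (valid_rep n c).
Local Notation proj := (projective n c).

Definition zrep : rep K := @Rep K (fun _ => 0%N) (fun _ => 0).

Lemma zrep_valid : valid zrep.
Proof. by split => i _ //; apply: mx_dim0. Qed.

Lemma zrep_proj : proj zrep.
Proof. by move=> V W g h *; exists (fun i => 0); split => i; apply: mx_dim0. Qed.

Definition srep (V W : rep K) : rep K :=
  @Rep K (fun i => rdim V i + rdim W i)%N (fun i => block_mx (rmap V i) 0 0 (rmap W i)).

Lemma pathmx_srep V W i k :
  pathmx (srep V W) i k = block_mx (pathmx V i k) 0 0 (pathmx W i k).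
Proof.
elim: k => [|k IH] /=; first by rewrite -scalar_mx_block.
by rewrite IH mulmx_block !mulmx0 !mul0mx !addr0 !add0r.
Qed.

Lemma srep_valid V W : valid V -> valid W -> valid (srep V W).
Proof.
move=> [hV1 hV2] [hW1 hW2]; split => i hi /=; first by rewrite hV1 ?hW1.
by rewrite pathmx_srep hV2 ?hW2 // block_mx0.
Qed.

Lemma srep_proj P Q : proj P -> proj Q -> proj (srep P Q).
Proof.
move=> pP pQ V W g h vV vW hg eg hh.
pose hu : Defs.hom P W := fun i => usubmx (h i : 'M_(rdim P i + rdim Q i, _)).
pose hd : Defs.hom Q W := fun i => dsubmx (h i : 'M_(rdim P i + rdim Q i, _)).
have Hh i : h i = col_mx (hu i) (hd i) by rewrite vsubmxK.
have e i : col_mx (rmap P i *m hu i.+1) (rmap Q i *m hd i.+1) =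
    col_mx (hu i *m rmap W i) (hd i *m rmap W i).
  by have := hh i; rewrite /= (Hh i.+1) (Hh i) mul_block_col mul_col_mx !mul0mx addr0 add0r.
have [hu' [hu'h hu'g]] := pP V W g hu vV vW hg eg (fun i => proj1 (eq_col_mx (e i))).
have [hd' [hd'h hd'g]] := pQ V W g hd vV vW hg eg (fun i => proj2 (eq_col_mx (e i))).
exists (fun i => col_mx (hu' i) (hd' i)); split => i /=.
  by rewrite mul_block_col mul_col_mx !mul0mx addr0 add0r hu'h hd'h.
by rewrite mul_col_mx hu'g hd'g -Hh.
Qed.

Section Image.
Variables (V W : rep K) (g : Defs.hom V W).
Definition imrep : rep K :=
  @Rep K (fun i => \rank (g i))
    (fun i => row_base (g i) *m rmap W i *m pinvmx (row_base (g i.+1))).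
Definition imm : Defs.hom imrep W := fun i => row_base (g i).
Definition ime : Defs.hom V imrep := fun i => g i *m pinvmx (row_base (g i)).

Hypothesis hg : is_hom g.

Lemma imm_free i : row_free (imm i).
Proof. exact: row_base_free. Qed.

Lemma ime_imm i : ime i *m imm i = g i.
Proof. by rewrite /ime /imm mulmxKpV // eq_row_base. Qed.

Lemma imm_hom : is_hom imm.
Proof.
move=> i; rewrite /imm /= mulmxKpV //.
rewrite eq_row_base.
have s1 : (row_base (g i) <= g i)%MS by rewrite eq_row_base.
apply: submx_trans (submxMr (rmap W i) s1) _.
by rewrite -hg submxMl.
Qed.

Lemma ime_hom : is_hom ime.
Proof.
move=> i; apply: (mono_cancel (imm_free i.+1)).
by rewrite -[LHS]mulmxA ime_imm hg -[RHS]mulmxA imm_hom mulmxA ime_imm.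
Qed.

Lemma ime_epi : epi ime.
Proof.
move=> i; rewrite /row_full eqn_leq rank_leq_col /=.
by rewrite -{1}(ime_imm i) mxrankM_maxl.
Qed.

Lemma imrep_valid : valid V -> valid W -> valid imrep.
Proof.
move=> _ [hW1 hW2]; split => i hi /=.
  by apply/eqP; rewrite -leqn0 -(hW1 i hi) rank_leq_col.
apply: (mono0 (imm_free (c i + i)%N)).
have: forall k, pathmx imrep i k *m imm (k + i)%N = imm i *m pathmx W i k.
  elim=> [|k IH]; first by rewrite /= mul1mx mulmx1.
  change (pathmx imrep i k *m rmap imrep (k+i)%N *m imm (k + i)%N.+1 =
    imm i *m (pathmx W i k *m rmap W (k + i)%N)).
  by rewrite -mulmxA (imm_hom (k + i)%N) mulmxA IH mulmxA.
by move=> ->; rewrite hW2 // mulmx0.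
Qed.
End Image.

Lemma rel_lift (P V W : rep K) (g : Defs.hom V W) (h : Defs.hom P W) :
  proj P -> valid V -> valid W -> is_hom g -> is_hom h ->
  (forall i, (h i <= g i)%MS) ->
  exists h' : Defs.hom P V, is_hom h' /\ forall i, h' i *m g i = h i.
Proof.
move=> pP vV vW hg hh sub.
pose ht : Defs.hom P (imrep g) := fun i => h i *m pinvmx (imm g i).
have htm i : ht i *m imm g i = h i.
  by rewrite /ht mulmxKpV // /imm eq_row_base.
have htH : is_hom ht.
  move=> i; apply: (mono_cancel (imm_free g i.+1)).
  by rewrite -[LHS]mulmxA htm hh -[RHS]mulmxA (imm_hom hg) mulmxA htm.
have [h' [h'h h'e]] := pP _ _ _ ht vV (imrep_valid hg vV vW) (ime_hom hg) (ime_epi g) htH.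
exists h'; split => // i.
by rewrite -(ime_imm g i) mulmxA h'e htm.
Qed.

Definition padP (P : nat -> rep K) m k : rep K := if (k <= m)%N then P k else zrep.
Definition padd (P : nat -> rep K) (d : forall k, Defs.hom (P k.+1) (P k)) m k :
  Defs.hom (padP P m k.+1) (padP P m k) :=
  (if (k.+1 <= m)%N as b return Defs.hom (if b then P k.+1 else zrep) (padP P m k) then
     (if (k <= m)%N as b' return Defs.hom (P k.+1) (if b' then P k else zrep) then d k
      else fun i => 0)
   else fun i => 0).

Lemma pdim_le_S (M : rep K) m : pdim_le n c M m -> pdim_le n c M m.+1.
Proof.
case=> P [d [eps [hP hd [he1 he2 he3] hex hmono]]].
exists (padP P m), (padd d m), eps; split.
- move=> k hk; rewrite /padP; case: leqP => hkm.
    exact: hP.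
  by split; [apply: zrep_valid | apply: zrep_proj].
- move=> k hk; rewrite /padd /padP.
  case: (ltngtP k m) => hkm.
  + exact: hd.
  + by move: hk; rewrite ltnS leqNgt hkm.
  + by move=> i /=; apply: mx_dim0.
- split => // _; case: m hP hd he3 hex hmono => [|m] hP hd he3 hex hmono.
    by move=> i; apply: ker_free; [apply: mx_dim0 | apply: hmono].
  by apply: he3.
- move=> k hk; rewrite /padd /padP.
  case: (ltngtP k.+1 m) => hkm.
  + by rewrite (ltnW (ltnW hkm)); exact: hex.
  + by move: hk; rewrite ltnS leqNgt hkm.
  + subst m; rewrite leqnSn => i /=.
    apply: ker_free; first by apply: mx_dim0.
    exact: hmono.
- by rewrite /padd /padP ltnn leqnn => i; apply: row_free0.
Qed.

Lemma pdim_le_mono (M : rep K) m m' : (m <= m')%N -> pdim_le n c M m -> pdim_le n c M m'.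
Proof.
move=> le; rewrite -(subnK le); elim: (m' - m)%N => [|k IH] //= h.
by rewrite addSn; apply: pdim_le_S; apply: IH.
Qed.

End Reps.

End B.

Module C.

Section Comb.
Variables (n : nat) (c : nat -> nat).
Hypothesis hc : kupisch n c.

Lemma c_pos i : i < n -> 0 < c i.
Proof. by case: hc => h _ _; apply: h. Qed.

Lemma c_step i : i.+1 < n -> c i <= (c i.+1).+1.
Proof. by case: hc => _ h _; apply: h. Qed.

Lemma c_bound i : i < n -> c i + i <= n.
Proof.
move=> hi; have [k ->] : exists k, i = n.-1 - k by exists (n.-1 - i); lia.
elim: k => [|k IH].
  case: hc => _ _ e; rewrite subn0 e; lia.
case: (ltnP k n.-1) => hk.
  have := c_step (i := n.-1 - k.+1); rewrite (_ : (n.-1 - k.+1).+1 = n.-1 - k); last lia.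
  move=> h; have := h ltac:(lia); lia.
rewrite (_ : n.-1 - k.+1 = n.-1 - k); last lia.
exact: IH.
Qed.

Definition par u := if u < n then u + c u else u.

Lemma par_le u : u <= n -> par u <= n.
Proof. by rewrite /par; case: ifP => // h _; have := c_bound h; lia. Qed.

Lemma par_gt u : u < n -> u < par u.
Proof. by move=> h; rewrite /par h; have := c_pos h; lia. Qed.

Lemma par_ge u : u <= par u.
Proof. by rewrite /par; case: ifP => //; lia. Qed.

Lemma par_mono1 u : u < n -> par u <= par u.+1.
Proof.
move=> h; rewrite /par h; case: ifP => h1.
  by have := c_step h1; lia.
by have := c_bound h; lia.
Qed.

Lemma par_mono u v : u <= v -> v <= n -> par u <= par v.
Proof.
move=> uv vn; have [k e] : exists k, v = u + k by exists (v - u); lia.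
subst v; clear uv; elim: k vn => [|k IH] vn; first by rewrite addn0.
have h1 : u + k <= n by lia.
apply: leq_trans (IH h1) _; rewrite addnS; apply: par_mono1; lia.
Qed.

Variable i0 : nat.
Fixpoint xp (k : nat) : nat * nat :=
  match k with 0 => (i0, i0.+1) | k'.+1 => ((xp k').2, par (xp k').1) end.
Definition x k := (xp k).1.
Lemma xS k : x k.+1 = (xp k).2. Proof. by []. Qed.
Lemma xSS k : x k.+2 = par (x k). Proof. by []. Qed.
Lemma x0 : x 0 = i0. Proof. by []. Qed.
Lemma x1 : x 1 = i0.+1. Proof. by []. Qed.

Hypothesis hi0 : i0 < n.

Lemma x_inv k : [/\ x k <= x k.+1, x k.+1 <= par (x k) & x k.+1 <= n].
Proof.
elim: k => [|k [h1 h2 h3]].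
  by rewrite x0 x1; split => //; apply: par_gt.
have hk : x k <= n by lia.
rewrite xSS; split => //.
  by apply: par_mono.
by apply: par_le.
Qed.

Lemma x_le_n k : x k <= n.
Proof. case: k => [|k]; [rewrite x0; lia | by case: (x_inv k)]. Qed.

Lemma x_mono a b : a <= b -> x a <= x b.
Proof.
move=> ab; have [k e] : exists k, b = a + k by exists (b - a); lia.
subst b; clear ab.
elim: k => [|k IH]; first by rewrite addn0.
by rewrite addnS; case: (x_inv (a + k)) => h _ _; lia.
Qed.

Lemma x_par k : x k.+1 <= par (x k). Proof. by case: (x_inv k). Qed.

Lemma x_ex : has (fun k => x k == x k.+1) (iota 0 n.+1).
Proof.
apply/negPn/negP => /hasPn H.
have : forall k, k <= n.+1 -> i0 + k <= x k.
  elim=> [|k IH] hk; first by rewrite x0 addn0.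
  have ne := H k ltac:(rewrite mem_iota; lia).
  case: (x_inv k) => h1 _ _.
  have : x k < x k.+1 by rewrite ltn_neqAle ne h1.
  have := IH ltac:(lia); lia.
move=> /(_ n.+1 (leqnn _)); have := x_le_n n.+1; lia.
Qed.

Definition Kd := find (fun k => x k == x k.+1) (iota 0 n.+1).

Lemma Kd_lt : Kd < n.+1.
Proof. by rewrite -(size_iota 0 n.+1) -has_find x_ex. Qed.

Lemma Kd_eq : x Kd = x Kd.+1.
Proof.
have := nth_find 0 x_ex; rewrite nth_iota ?Kd_lt // add0n => /eqP.
by [].
Qed.

Lemma Kd_before k : k < Kd -> x k < x k.+1.
Proof.
move=> hk; have := before_find 0 hk; rewrite nth_iota; last first.
  by apply: leq_trans hk (ltnW Kd_lt).
rewrite add0n => /negbT ne; case: (x_inv k) => h1 _ _.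
by rewrite ltn_neqAle ne.
Qed.

Lemma Kd_pos : 0 < Kd.
Proof.
rewrite lt0n; apply/eqP => e; have := Kd_eq; rewrite e x0 x1; lia.
Qed.

Lemma x_strict a b : a < b -> a < Kd -> x a < x b.
Proof. move=> ab aK; have := Kd_before aK; have := x_mono ab; lia. Qed.

Lemma x_lt_n k : k < Kd -> x k < n.
Proof. move=> h; have := Kd_before h; have := x_le_n k.+1; lia. Qed.

Lemma x_even s : x (s.*2) = iter s par i0.
Proof. by elim: s => [|s IH] //; rewrite doubleS xSS IH. Qed.

Lemma x_odd s : x (s.*2.+1) = iter s par i0.+1.
Proof. by elim: s => [|s IH] //; rewrite doubleS xSS IH. Qed.

End Comb.

Section Tree.
Variables (n : nat) (c : nat -> nat).
Hypothesis hc : kupisch n c.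
Local Notation par := (par n c).

Lemma tadjP u v : tadj n c u v -> (u < n /\ v = par u) \/ (v < n /\ u = par v).
Proof.
rewrite /tadj /par => /orP [/andP [h /eqP e] | /andP [h /eqP e]].
  by left; rewrite h.
by right; rewrite h.
Qed.

Lemma treach_lower k u v : treach n c k u v ->
  exists s t, iter s par u = iter t par v /\ s + t <= k.
Proof.
elim: k u => [|k IH] u.
  by move=> /eqP ->; exists 0, 0.
case/seq.hasP => w _ /andP [/tadjP h /IH [s [t [e le]]]].
case: h => [[hu ew] | [hw eu]].
  by exists s.+1, t; split; [rewrite iterSr -ew | lia].
case: s e le => [|s] e le.
  by exists 0, t.+1; split; [rewrite /= eu -e | lia].
by exists s, t; split; [rewrite -e iterSr -eu | lia].
Qed.

Lemma treach_cons k u w v : tadj n c u w -> w <= n -> treach n c k w v ->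
  treach n c k.+1 u v.
Proof.
move=> a wn r; apply/seq.hasP; exists w; first by rewrite mem_iota; lia.
by rewrite a.
Qed.

Lemma treach_cat a b u w v : treach n c a u w -> treach n c b w v ->
  treach n c (a + b) u v.
Proof.
elim: a u => [|a IH] u; first by move=> /eqP ->.
case/seq.hasP => w' hw' /andP [h1 h2] r; apply/seq.hasP; exists w' => //.
by apply/andP; split => //; exact: IH.
Qed.

Lemma tadj_up u : u < n -> tadj n c u (par u).
Proof. by move=> h; rewrite /tadj /par h eqxx. Qed.

Lemma tadj_down u : u < n -> tadj n c (par u) u.
Proof. by move=> h; rewrite /tadj /par h eqxx orbT. Qed.

Lemma treach_up a u : u <= n -> (forall s, s < a -> iter s par u < n) ->
  treach n c a u (iter a par u).
Proof.
move=> un; elim: a => [|a IH] H; first exact: eqxx.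
have ha := H a (ltnSn _).
have hn : iter a par u <= n.
  by move: (a) => b; elim: b => //= b hb; apply: par_le.
have -> : a.+1 = a + 1 by rewrite addn1.
apply: (@treach_cat _ _ _ (iter a par u)).
  by apply: IH => s hs; apply: H; lia.
rewrite addn1; apply: (treach_cons (tadj_up ha)); first by apply: par_le.
exact: eqxx.
Qed.

Lemma treach_down a u : u <= n -> (forall s, s < a -> iter s par u < n) ->
  treach n c a (iter a par u) u.
Proof.
move=> un; elim: a => [|a IH] H; first exact: eqxx.
have ha := H a (ltnSn _).
have hn : iter a par u <= n.
  by move: (a) => b; elim: b => //= b hb; apply: par_le.
apply: (treach_cons (tadj_down ha)) => //.
by apply: IH => s hs; apply: H; lia.
Qed.

Lemma find_iota (p : pred nat) N k : k < N -> p k -> (forall k', k' < k -> ~~ p k') ->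
  find p (iota 0 N) = k.
Proof.
move=> kN pk H.
have hh : has p (iota 0 N) by apply/seq.hasP; exists k => //; rewrite mem_iota; lia.
have fl : find p (iota 0 N) < N by move: hh; rewrite has_find size_iota.
case: (ltngtP (find p (iota 0 N)) k) => // h.
  have := nth_find 0 hh; rewrite nth_iota // add0n => pf.
  by have := H _ h; rewrite pf.
have := before_find 0 h; rewrite nth_iota ?add0n ?pk //; lia.
Qed.

Lemma tdist_Kd i : i < n -> tdist n c i i.+1 = Kd n c i.
Proof.
move=> hi; rewrite /tdist; set Kd' := Kd n c i.
have hK := Kd_lt hc hi; have hKe := Kd_eq hc hi; have hKp := Kd_pos hc hi.
apply: find_iota => //.
-
  have Hup : forall s, s.*2 < Kd' -> iter s par i < n.
    by move=> s hs; rewrite -x_even; apply: x_lt_n.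
  have Hdn : forall s, s.*2.+1 < Kd' -> iter s par i.+1 < n.
    by move=> s hs; rewrite -x_odd; apply: x_lt_n.
  case/boolP: (odd Kd') => od.
  + have [a ea] : exists a, Kd' = a.*2.+1.
      by exists Kd'./2; rewrite -{1}(odd_double_half Kd') od.
    rewrite ea (_ : a.*2.+1 = a.+1 + a); last by rewrite -addnn; lia.
    apply: (@treach_cat _ _ _ (iter a.+1 par i)).
      apply: treach_up; first lia.
      by move=> s hs; apply: Hup; lia.
    have -> : iter a.+1 par i = iter a par i.+1.
      by rewrite -x_even -x_odd doubleS -ea.
    apply: treach_down; first lia.
    by move=> s hs; apply: Hdn; lia.
  + have [a ea] : exists a, Kd' = a.*2.
      by exists Kd'./2; rewrite -{1}(odd_double_half Kd') (negbTE od).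
    rewrite ea -addnn.
    apply: (@treach_cat _ _ _ (iter a par i)).
      apply: treach_up; first lia.
      by move=> s hs; apply: Hup; lia.
    have -> : iter a par i = iter a par i.+1.
      by rewrite -x_even -x_odd -ea.
    apply: treach_down; first lia.
    by move=> s hs; apply: Hdn; lia.
- move=> k hk; apply/negP => /treach_lower [s [t [e le]]].
  move: e; rewrite -x_even -x_odd => e.
  case: (leqP s t) => st.
    by have := x_strict hc hi (a := s.*2) (b := t.*2.+1) ltac:(lia) ltac:(lia); lia.
  by have := x_strict hc hi (a := t.*2.+1) (b := s.*2) ltac:(lia) ltac:(lia); lia.
Qed.

End Tree.

End C.

Module D.
Import A B C.
Import GRing.Theory.
Local Open Scope ring_scope.

Ltac arith := rewrite /=; repeat (case: ifP => ?); lia.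

Section Intv.
Variable K : fieldType.
Variables (n : nat) (c : nat -> nat).
Hypothesis hc : kupisch n c.
Local Notation valid := (valid_rep n c).
Local Notation proj := (projective n c).
Local Notation par := (par n c).

Definition Int (a b D : nat) : rep K :=
  @Rep K (fun i => if (a <= i < b)%N then D else 0%N) (fun i => pid_mx D).

Lemma pid_exact D p2 p1 p0 :
  minn p1 (minn D (minn p2 p0)) = 0%N ->
  (p1 <= minn D (minn p2 p1) + minn D (minn p1 p0))%N ->
  ((pid_mx D : 'M[K]_(p2,p1)) == kermx (pid_mx D : 'M[K]_(p1,p0)))%MS.
Proof.
move=> h1 h2; apply: eq_ker_rank; last by rewrite !rank_pid.
rewrite mul_pid pid_is0 //; lia.
Qed.

Lemma pid_free D p q : minn D (minn p q) = p -> row_free (pid_mx D : 'M[K]_(p,q)).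
Proof. by move=> h; rewrite /row_free rank_pid h. Qed.

Lemma pid_full D p q : minn D (minn p q) = q -> row_full (pid_mx D : 'M[K]_(p,q)).
Proof. by move=> h; rewrite /row_full rank_pid h. Qed.

Lemma pm_Int a b D u v : (u <= v)%N ->
  pm (Int a b D) u v = pid_mx (if (a <= u)%N && (v < b)%N then D else 0%N).
Proof.
elim: v => [|v IH] le.
  move: le; rewrite leqn0 => /eqP ->; rewrite pm_id -pid_mx_1; apply: pid_eq; arith.
move: le; rewrite leq_eqVlt => /orP [/eqP -> | lt].
  rewrite pm_id -pid_mx_1; apply: pid_eq; arith.
rewrite pmS // IH // mul_pid; apply: pid_eq; arith.
Qed.

Lemma Int_valid a b D : (b <= par a)%N -> (b <= n)%N -> valid (Int a b D).
Proof.
move=> hb hbn; split => i hi; first by arith.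
rewrite -pm_path pm_Int ?leq_addl //; apply: pid_is0.
have h : (a <= i)%N -> (b <= c i + i)%N.
  move=> ai; have := par_mono hc ai (ltnW hi); rewrite {2}/par hi; lia.
move: h; arith.
Qed.

Lemma pid_hom_Int a b a' b' D : (a' <= a)%N -> (b' <= b)%N ->
  is_hom (fun i => pid_mx D : 'M[K]_(rdim (Int a b D) i, rdim (Int a' b' D) i)).
Proof. by move=> h1 h2 i; rewrite /= !mul_pid; apply: pid_eq; arith. Qed.

Lemma Int_lift a D (V W : rep K) (g : Defs.hom V W) (h : Defs.hom (Int a (par a) D) W) :
  (a < n)%N -> valid V -> valid W -> is_hom g -> is_hom h -> (h a <= g a)%MS ->
  exists h' : Defs.hom (Int a (par a) D) V, is_hom h' /\ forall i, h' i *m g i = h i.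
Proof.
move=> an vV vW hg hh /submxP [X eX].
set P := Int a (par a) D.
have hpa : par a = (c a + a)%N by rewrite /par an addnC.
exists (fun i => (pid_mx D : 'M_(rdim P i, rdim P a)) *m X *m pm V a i); split.
  move=> i; case: (ltnP i a) => ia; first by apply: mx_dim0; arith.
  case: (ltnP i.+1 (par a)) => ip.
    rewrite pmS // !mulmxA /= mul_pid (@pid_eq _ _ _ _ D); first by [].
    arith.
  case: (ltnP i (par a)) => ip2; last by apply: mx_dim0; arith.
  have E : pm V a i.+1 = 0.
    have : i.+1 = (c a + a)%N by lia.
    by move=> e; rewrite e; exact: pm_valid vV an.
  by rewrite -[RHS]mulmxA -pmS // E !mulmx0.
move=> i; case: (ltnP i a) => ia; first by apply: mx_dim0; arith.
rewrite -!mulmxA (pm_hom hg) // (mulmxA X) -eX -(pm_hom hh) // mulmxA.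
rewrite pm_Int // mul_pid -[RHS]mul1mx; congr (_ *m _).
rewrite -pid_mx_1; apply: pid_eq; arith.
Qed.

Lemma Int_proj a D : (a < n)%N -> proj (Int a (par a) D).
Proof.
move=> an V W g h vV vW hg eg hh; apply: Int_lift => //.
exact: submx_full.
Qed.

End Intv.

End D.

Module E.
Import A B C D.
Import GRing.Theory.
Local Open Scope ring_scope.

Arguments x : simpl never.
Arguments par : simpl never.

Section Conc.
Variable K : fieldType.
Variables (n : nat) (c : nat -> nat).
Hypothesis hc : kupisch n c.
Variable j : nat.
Hypothesis hj : (j < n)%N.
Variable N : rep K.
Hypothesis vN : valid_rep n c N.
Hypothesis hN : forall i, i != j -> rdim N i = 0%N.
Local Notation x := (x n c j).
Local Notation Kd := (Kd n c j).
Local Notation D := (rdim N j).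

Lemma hNe i : rdim N i = if i == j then D else 0%N.
Proof. by case: eqP => [->|/eqP ne]; [|apply: hN]. Qed.

Definition Q k : rep K := Int K (x k) (x k.+2) D.
Definition dQ k : Defs.hom (Q k.+1) (Q k) := fun i => pid_mx D.
Definition eQ : Defs.hom (Q 0) N := fun i => pid_mx D.

Lemma xf k : [/\ (x k <= x k.+1)%N, (x k.+1 <= x k.+2)%N & (x k.+2 <= n)%N].
Proof.
case: (x_inv hc hj k) => h1 h2 h3; split => //; exact: x_le_n.
Qed.

Lemma x0' : x 0 = j. Proof. by []. Qed.
Lemma x1' : x 1 = j.+1. Proof. by []. Qed.
Lemma x2' : x 2 = par n c j. Proof. by []. Qed.
Lemma xSS' k : x k.+2 = par n c (x k). Proof. by []. Qed.

Lemma Q_valid k : valid_rep n c (Q k).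
Proof.
apply: Int_valid => //; by case: (xf k).
Qed.

Lemma Q_proj k : (k < Kd)%N -> projective n c (Q k).
Proof.
move=> hk; rewrite /Q xSS'; apply: Int_proj => //.
exact: x_lt_n.
Qed.

Lemma dQ_hom k : is_hom (dQ k).
Proof.
apply: pid_hom_Int; first by case: (xf k).
by case: (xf k.+1).
Qed.

Lemma eQ_hom : is_hom eQ.
Proof.
move=> i; apply: mx_dim0; rewrite (hNe i.+1) /Q x0'.
have := par_gt hc hj; rewrite -x2'; arith.
Qed.

Lemma eQ_epi : epi eQ.
Proof.
move=> i; apply: pid_full; rewrite (hNe i) /Q x0'.
have := par_gt hc hj; rewrite -x2'; arith.
Qed.

Lemma Q_exact0 : exact_at (dQ 0) eQ.
Proof.
move=> i; apply: pid_exact; rewrite (hNe i) /Q x0';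
have := par_gt hc hj; rewrite -x2'; rewrite x1';
have := par_mono hc (u := j) (v := j.+1) (leqnSn _) hj; rewrite -x2';
rewrite (_ : par n c j.+1 = x 3) //; arith.
Qed.

Lemma Q_exact k : exact_at (dQ k.+1) (dQ k).
Proof.
move=> i; apply: pid_exact;
case: (xf k) => h1 h2 h3; case: (xf k.+1) => h4 h5 h6; case: (xf k.+2) => h7 h8 h9;
arith.
Qed.

Lemma conc_res : pdim_le n c N (Kd - 1).
Proof.
have hKp := Kd_pos hc hj.
exists Q, dQ, eQ; split.
- move=> k hk; split; first exact: Q_valid.
  by apply: Q_proj; lia.
- by move=> k _; apply: dQ_hom.
- by split; [exact: eQ_hom | exact: eQ_epi | move=> _; exact: Q_exact0].
- by move=> k _; apply: Q_exact.
- have hKe := Kd_eq hc hj.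
  case E: (Kd - 1)%N => [|m] i.
    have e1 : Kd = 1%N by lia.
    rewrite e1 in hKe.
    apply: pid_free; rewrite (hNe i) /Q x0'; rewrite x1' in hKe; rewrite -hKe; arith.
  have e1 : Kd = m.+2 by lia.
  rewrite e1 in hKe.
  apply: pid_free.
  case: (xf m) => h1 h2 h3; case: (xf m.+1) => h4 h5 h6; case: (xf m.+2) => h7 h8 h9.
  arith.
Qed.

End Conc.

End E.

Module F.
Import A B.
Import GRing.Theory.
Local Open Scope ring_scope.

Section Comp.
Variable K : fieldType.
Variables (n : nat) (c : nat -> nat).
Local Notation valid := (valid_rep n c).
Local Notation proj := (projective n c).

Lemma hom_comp (U V W : rep K) (f : Defs.hom U V) (g : Defs.hom V W) :
  is_hom f -> is_hom g -> is_hom (fun i => f i *m g i).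
Proof. by move=> hf hg i; rewrite mulmxA hf -!mulmxA hg. Qed.

Lemma hom_id (U : rep K) : is_hom (fun i => 1%:M : 'M[K]_(rdim U i)).
Proof. by move=> i; rewrite mulmx1 mul1mx. Qed.

Variables (S T : rep K) (X Y : nat -> rep K).
Variables (dX : forall k, Defs.hom (X k.+1) (X k)) (dY : forall k, Defs.hom (Y k.+1) (Y k)).
Variables (eX : Defs.hom (X 0) S) (eY : Defs.hom (Y 0) T) (f : Defs.hom S T).
Variable m : nat.
Hypotheses (hXp : forall k, (k <= m)%N -> proj (X k))
  (hXc : forall k, (k < m)%N -> is_hom (dX k))
  (hXd0 : (0 < m)%N -> forall i, dX 0 i *m eX i = 0)
  (hXdd : forall k, (k.+1 < m)%N -> forall i, dX k.+1 i *m dX k i = 0)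
  (hXe : is_hom eX)
  (hYv : forall k, (k <= m)%N -> valid (Y k)) (hTv : valid T)
  (hYc : forall k, (k < m)%N -> is_hom (dY k))
  (hYe : is_hom eY) (hYepi : epi eY)
  (hYe0 : (0 < m)%N -> exact_at (dY 0) eY)
  (hYex : forall k, (k.+1 < m)%N -> exact_at (dY k.+1) (dY k))
  (hf : is_hom f).

Definition Pc0 (a : Defs.hom (X 0) (Y 0)) : Prop :=
    is_hom a /\ forall i, a i *m eY i = eX i *m f i.
Definition Pcn k (a : Defs.hom (X k) (Y k)) (a' : Defs.hom (X k.+1) (Y k.+1)) : Prop :=
    is_hom a' /\ forall i, dX k i *m a i = a' i *m dY k i.
Definition inh0 (U V : rep K) : inhabited (Defs.hom U V) := inhabits (fun i => 0).
Definition cmp0 : Defs.hom (X 0) (Y 0) := epsilon (inh0 _ _) Pc0.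
Definition cmpnext k (a : Defs.hom (X k) (Y k)) : Defs.hom (X k.+1) (Y k.+1) :=
  epsilon (inh0 _ _) (Pcn a).
Fixpoint cmp k : Defs.hom (X k) (Y k) :=
  match k with 0 => cmp0 | k'.+1 => cmpnext (cmp k') end.

Lemma cmp_spec k : (k <= m)%N -> is_hom (cmp k) /\
  match k return Defs.hom (X k) (Y k) -> Prop with
  | 0 => fun a => forall i, a i *m eY i = eX i *m f i
  | k'.+1 => fun a => forall i, dX k' i *m cmp k' i = a i *m dY k' i
  end (cmp k).
Proof.
elim: k => [|k IH] hk.
  apply: (@epsilon_spec _ (inh0 _ _) Pc0).
  have [a [ha1 ha2]] := hXp (leq0n m) (hYv (leq0n m)) hTv hYe hYepi
    (hom_comp hXe hf).
  by exists a.
have [IH1 IH2] := IH (ltnW hk).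
apply: (@epsilon_spec _ (inh0 _ _) (Pcn (cmp k))).
have hh := hom_comp (hXc hk) IH1.
have sub : forall i, ((fun i => dX k i *m cmp k i) i <= dY k i)%MS.
  move=> i /=; case: k IH IH1 IH2 hk hh => [|k] IH IH1 IH2 hk hh.
    apply: (exact_sub (hYe0 hk i)).
    by rewrite -mulmxA IH2 mulmxA hXd0 // mul0mx.
  apply: (exact_sub (hYex hk i)).
  by rewrite -mulmxA -IH2 mulmxA hXdd // mul0mx.
have [a' [h1 h2]] := rel_lift (hXp hk) (hYv hk) (hYv (ltnW hk)) (hYc hk) hh sub.
by exists a'; split => // i; rewrite h2.
Qed.

Lemma comparison : exists a : forall k, Defs.hom (X k) (Y k),
  [/\ forall k, (k <= m)%N -> is_hom (a k),
      forall i, a 0%N i *m eY i = eX i *m f i &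
      forall k, (k < m)%N -> forall i, dX k i *m a k i = a k.+1 i *m dY k i].
Proof.
exists cmp; split.
- by move=> k hk; case: (cmp_spec hk).
- by case: (cmp_spec (leq0n m)).
- by move=> k hk i; case: (cmp_spec hk) => _; apply.
Qed.

End Comp.

End F.

Module G.
Import A B C D E F.
Import GRing.Theory.
Local Open Scope ring_scope.

Arguments x : simpl never.
Arguments par : simpl never.

Lemma rank_full_mul (K : fieldType) p q r (A : 'M[K]_(p,q)) (B : 'M[K]_(q,r)) :
  row_full A -> \rank (A *m B) = \rank B.
Proof.
case/row_fullP => A' e; apply/eqP; rewrite eqn_leq mxrankM_maxr /=.
have -> : \rank B = \rank (A' *m (A *m B)) by rewrite mulmxA e mul1mx.
exact: mxrankM_maxr.
Qed.

Section Lower.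
Variable K : fieldType.
Variables (n : nat) (c : nat -> nat).
Hypothesis hc : kupisch n c.
Variable j : nat.
Hypothesis hj : (j < n)%N.
Variable N : rep K.
Hypothesis vN : valid_rep n c N.
Hypothesis hN : forall i, i != j -> rdim N i = 0%N.
Hypothesis hD : (0 < rdim N j)%N.
Local Notation x := (x n c j).
Local Notation Kd := (Kd n c j).
Local Notation D := (rdim N j).
Local Notation Q := (Q n c j N).
Local Notation dQ := (dQ n c j N).
Local Notation eQ := (eQ n c j N).

Lemma lower m : pdim_le n c N m -> (Kd - 1 <= m)%N.
Proof.
case=> P [d [eps [hP hd [he1 he2 he3] hex hmono]]].
rewrite leqNgt; apply/negP => hm.
have hQ0' i := exact_mul0 (Q_exact0 hc hj hN i).
have hQd k i := exact_mul0 (Q_exact hc hj N k i).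
have [al [al1 al2 al3]] := @comparison K n c N N Q P dQ d eQ eps
  (fun i => 1%:M) m
  (fun k hk => @Q_proj _ _ _ hc _ hj N k ltac:(lia))
  (fun k _ => dQ_hom hc hj N k)
  (fun _ i => hQ0' i) (fun k _ i => hQd k i) (eQ_hom hc hj hN)
  (fun k hk => proj1 (hP k hk)) vN hd he1 he2 he3 hex (hom_id N).
have [be [be1 be2 be3]] := @comparison K n c N N P Q d dQ eps eQ
  (fun i => 1%:M) m
  (fun k hk => proj2 (hP k hk)) hd
  (fun hm0 i => exact_mul0 (he3 hm0 i)) (fun k hk i => exact_mul0 (hex k hk i)) he1
  (fun k _ => Q_valid hc hj N k) vN (fun k _ => dQ_hom hc hj N k)
  (eQ_hom hc hj hN) (eQ_epi hc hj hN)
  (fun _ => Q_exact0 hc hj hN) (fun k _ => Q_exact hc hj N k) (hom_id N).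
pose ga k := fun i => al k i *m be k i.
have gah k : (k <= m)%N -> is_hom (ga k) by move=> hk; apply: hom_comp; [apply: al1|apply: be1].
have gac k : (k < m)%N -> forall i, dQ k i *m ga k i = ga k.+1 i *m dQ k i.
  by move=> hk i; rewrite /ga mulmxA al3 // -mulmxA be3 // mulmxA.
have Kdlt : (m.+1 < Kd)%N by lia.
have xs k : (k < Kd)%N -> (x k < x k.+1)%N by move=> hk; apply: Kd_before.
have xf' k := xf hc hj k.
have dimQ k v : rdim (Q k) v = if (x k <= v < x k.+2)%N then D else 0%N by [].
have cA : \rank (ga 0%N j) = D.
  have e : ga 0%N j *m eQ j = eQ j by rewrite /ga -mulmxA be2 mulmx1 al2 mulmx1.
  have r1 : \rank (eQ j) = D.
    rewrite /E.eQ rank_pid.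
    have := par_gt hc hj; rewrite -x2' /E.Q x0' /=; arith.
  apply/eqP; rewrite eqn_leq; apply/andP; split.
    apply: leq_trans (rank_leq_row _) _; rewrite /= x0'.
    have := par_gt hc hj; rewrite -x2'; arith.
  by rewrite -{1}r1 -e mxrankM_maxl.
have cB k : (k <= m)%N -> \rank (ga k (x k)) = D -> \rank (ga k (x k.+1)) = D.
  move=> hk r.
  have hx := xs k ltac:(lia); case: (xf' k) => h1 h2 h3.
  have e := pm_hom (gah k hk) (ltnW hx).
  have E1 : pm (Q k) (x k) (x k.+1) = pid_mx D.
    rewrite pm_Int; last by lia.
    apply: pid_eq; have := xs k.+1 ltac:(lia); rewrite !dimQ; arith.
  rewrite E1 in e.
  have fr : row_free (pid_mx D : 'M[K]_(rdim (Q k) (x k), rdim (Q k) (x k.+1))).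
    apply: pid_free; rewrite !dimQ; have := xs k.+1 ltac:(lia); arith.
  have r2 : \rank (ga k (x k) *m (pid_mx D : 'M[K]_(rdim (Q k) (x k), rdim (Q k) (x k.+1)))) = D.
    by rewrite (mxrankMfree _ fr).
  apply/eqP; rewrite eqn_leq; apply/andP; split.
    apply: leq_trans (rank_leq_row _) _; rewrite dimQ; arith.
  by rewrite -{1}r2 -e mxrankM_maxr.
have cC k : (k < m)%N -> \rank (ga k (x k.+1)) = D -> \rank (ga k.+1 (x k.+1)) = D.
  move=> hk r; have e := gac k hk (x k.+1).
  have hx := xs k.+1 ltac:(lia); case: (xf' k) => h1 h2 h3; case: (xf' k.+1) => h4 h5 h6.
  have fu : row_full (dQ k (x k.+1)).
    apply: pid_full; rewrite !dimQ; arith.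
  have r2 : \rank (dQ k (x k.+1) *m ga k (x k.+1)) = D by rewrite rank_full_mul.
  apply/eqP; rewrite eqn_leq; apply/andP; split.
    apply: leq_trans (rank_leq_row _) _; rewrite dimQ; arith.
  by rewrite -{1}r2 e mxrankM_maxl.
have cAll : forall k, (k <= m)%N -> \rank (ga k (x k)) = D.
  elim=> [|k IH] hk; first exact: cA.
  by apply: cC => //; apply: cB; [lia | apply: IH; lia].
have rm := cB m (leqnn m) (cAll m (leqnn m)).
have h0 : dQ m (x m.+1) *m al m (x m.+1) = 0.
  case: m hm hP hd he3 hex hmono al1 al2 al3 be1 be2 be3 gah gac Kdlt cB cC cAll rm
    => [|m'] hm hP hd he3 hex hmono al1 al2 al3 be1 be2 be3 gah gac Kdlt cB cC cAll rm.
    apply: (mono0 (hmono (x 1))).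
    by rewrite -mulmxA al2 mulmx1 hQ0'.
  apply: (mono0 (hmono (x m'.+2))).
  by rewrite -mulmxA -al3 // mulmxA hQd mul0mx.
have fu : row_full (dQ m (x m.+1)).
  have hx := xs m.+1 ltac:(lia); case: (xf' m) => h1 h2 h3; case: (xf' m.+1) => h4 h5 h6.
  apply: pid_full; rewrite !dimQ; arith.
have : \rank (al m (x m.+1)) = 0%N by rewrite -(rank_full_mul _ fu) h0 mxrank0.
move/eqP; rewrite mxrank_eq0 => /eqP a0.
by move: rm; rewrite /ga a0 mul0mx mxrank0; lia.
Qed.

End Lower.

End G.

Module H.
Import A B F.
Import GRing.Theory.
Local Open Scope ring_scope.

Lemma rowfree_of (K : fieldType) p q (A : 'M[K]_(p,q)) :
  (forall w : 'rV_p, w *m A = 0 -> w = 0) -> row_free A.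
Proof. by move=> H; rewrite -kermx_eq0; apply/rowV0P => v /sub_kermxP /H. Qed.

Lemma rowfull_of (K : fieldType) p q (A : 'M[K]_(p,q)) :
  (forall w : 'rV_q, (w <= A)%MS) -> row_full A.
Proof. by move=> H; rewrite -sub1mx; apply/rV_subP => v _; apply: H. Qed.

Lemma hom_opp (K : fieldType) (U V : rep K) (f : Defs.hom U V) :
  is_hom f -> is_hom (fun i => - f i).
Proof. by move=> hf i; rewrite mulmxN mulNmx hf. Qed.

Section Horse.
Variables (K : fieldType) (n : nat) (c : nat -> nat).
Local Notation valid := (valid_rep n c).
Local Notation proj := (projective n c).
Variables (M1 M M2 : rep K) (io : Defs.hom M1 M) (pi : Defs.hom M M2).
Hypotheses (vM1 : valid M1) (vM : valid M) (vM2 : valid M2)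
  (hio : is_hom io) (hpi : is_hom pi) (mio : mono io) (epi_pi : epi pi)
  (exm : exact_at io pi).
Variables (P1 : nat -> rep K) (d1 : forall k, Defs.hom (P1 k.+1) (P1 k)) (e1 : Defs.hom (P1 0) M1).
Variables (P2 : nat -> rep K) (d2 : forall k, Defs.hom (P2 k.+1) (P2 k)) (e2 : Defs.hom (P2 0) M2).
Variable m : nat.
Hypotheses (hP1 : forall k, (k <= m)%N -> valid (P1 k) /\ proj (P1 k))
  (hd1 : forall k, (k < m)%N -> is_hom (d1 k)) (he1 : is_hom e1) (ee1 : epi e1)
  (ex10 : (0 < m)%N -> exact_at (d1 0) e1)
  (ex1 : forall k, (k.+1 < m)%N -> exact_at (d1 k.+1) (d1 k))
  (mo1 : match m with 0 => mono e1 | m'.+1 => mono (d1 m') end).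
Hypotheses (hP2 : forall k, (k <= m)%N -> valid (P2 k) /\ proj (P2 k))
  (hd2 : forall k, (k < m)%N -> is_hom (d2 k)) (he2 : is_hom e2) (ee2 : epi e2)
  (ex20 : (0 < m)%N -> exact_at (d2 0) e2)
  (ex2 : forall k, (k.+1 < m)%N -> exact_at (d2 k.+1) (d2 k))
  (mo2 : match m with 0 => mono e2 | m'.+1 => mono (d2 m') end).
Variable tau : Defs.hom (P2 0) M.
Hypotheses (htau : is_hom tau) (etau : forall i, tau i *m pi i = e2 i).

Definition g0 : Defs.hom (P1 0) M := fun i => e1 i *m io i.

Definition Ps0 (s : Defs.hom (P2 1) (P1 0)) : Prop :=
  is_hom s /\ forall i, s i *m g0 i = - (d2 0 i *m tau i).
Definition Psn k (s : Defs.hom (P2 k.+1) (P1 k)) (s' : Defs.hom (P2 k.+2) (P1 k.+1)) : Prop :=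
  is_hom s' /\ forall i, s' i *m d1 k i = - (d2 k.+1 i *m s i).
Definition sg0 := epsilon (inh0 _ _) Ps0.
Definition sgnext k (s : Defs.hom (P2 k.+1) (P1 k)) := epsilon (inh0 _ _) (Psn s).
Fixpoint sg k : Defs.hom (P2 k.+1) (P1 k) :=
  match k with 0 => sg0 | k'.+1 => sgnext (sg k') end.

Lemma io_e1 i : (io i <= g0 i)%MS.
Proof.
rewrite /g0 -{1}(mul1mx (io i)); apply: submxMr.
by rewrite sub1mx.
Qed.

Lemma e2d2 i : (0 < m)%N -> d2 0 i *m e2 i = 0.
Proof. by move=> h; apply: exact_mul0; apply: ex20. Qed.

Lemma sg_spec k : (k < m)%N -> is_hom (sg k) /\
  match k return Defs.hom (P2 k.+1) (P1 k) -> Prop with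
  | 0 => fun s => forall i, s i *m g0 i = - (d2 0 i *m tau i)
  | k'.+1 => fun s => forall i, s i *m d1 k' i = - (d2 k'.+1 i *m sg k' i)
  end (sg k).
Proof.
elim: k => [|k IH] hk.
  apply: (@epsilon_spec _ (inh0 _ _) Ps0).
  have hh : is_hom (fun i => - (d2 0 i *m tau i)).
    by apply: hom_opp; apply: hom_comp => //; apply: hd2.
  have hg : is_hom g0 by apply: hom_comp.
  have sub : forall i, ((fun i => - (d2 0 i *m tau i)) i <= g0 i)%MS.
    move=> i /=; apply: submx_trans (io_e1 i); apply: (exact_sub (exm i)).
    by rewrite mulNmx -mulmxA etau e2d2 ?oppr0.
  have [s [h1 h2]] := rel_lift (proj2 (hP2 hk)) (proj1 (hP1 (leq0n m))) vM hg hh sub.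
  by exists s.
have [IH1 IH2] := IH (ltnW hk).
apply: (@epsilon_spec _ (inh0 _ _) (Psn (sg k))).
have hh : is_hom (fun i => - (d2 k.+1 i *m sg k i)).
  by apply: hom_opp; apply: hom_comp => //; apply: hd2.
have sub : forall i, ((fun i => - (d2 k.+1 i *m sg k i)) i <= d1 k i)%MS.
  move=> i /=; case: k IH IH1 IH2 hk hh => [|k] IH IH1 IH2 hk hh.
    apply: (exact_sub (ex10 (ltnW hk) i)).
    apply: (mono0 (mio i)); rewrite -mulmxA -/(g0 i) mulNmx -mulmxA IH2 mulmxN opprK.
    by rewrite mulmxA (exact_mul0 (ex2 hk i)) mul0mx.
  apply: (exact_sub (ex1 (ltnW hk) i)).
  by rewrite mulNmx -mulmxA IH2 mulmxN opprK mulmxA (exact_mul0 (ex2 hk i)) mul0mx.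
have [s [h1 h2]] := rel_lift (proj2 (hP2 hk)) (proj1 (hP1 (k:=k.+1) (ltnW hk)))
  (proj1 (hP1 (k:=k) (ltnW (ltnW hk)))) (hd1 (k:=k) (ltnW hk)) hh sub.
by exists s.
Qed.

Definition PH k : rep K := srep (P1 k) (P2 k).
Definition DH k : Defs.hom (PH k.+1) (PH k) :=
  fun i => block_mx (d1 k i) 0 (sg k i) (d2 k i).
Definition EH : Defs.hom (PH 0) M := fun i => col_mx (g0 i) (tau i).

Lemma horse_res : pdim_le n c M m.
Proof.
exists PH, DH, EH; split.
- move=> k hk; case: (hP1 hk) => v1 p1; case: (hP2 hk) => v2 p2.
  by split; [apply: srep_valid | apply: srep_proj].
- move=> k hk i; have [s1 _] := sg_spec hk.
  rewrite /DH /= !mulmx_block !mulmx0 !mul0mx !addr0 !add0r.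
  by rewrite (hd1 hk) (hd2 hk) s1.
- split.
  + move=> i; rewrite /EH /= mul_block_col mul_col_mx !mul0mx addr0 add0r.
    by rewrite /g0 mulmxA he1 -!mulmxA hio htau.
  + move=> i; apply: rowfull_of => w.
    have [z ez] : exists z, w *m pi i = z *m e2 i.
      by apply/submxP; apply: submx_full.
    have : ((w - z *m tau i) <= io i)%MS.
      by apply: (exact_sub (exm i)); rewrite mulmxBl -mulmxA etau ez subrr.
    case/submxP => u eu.
    have [y ey] : exists y, u = y *m e1 i by apply/submxP; apply: submx_full.
    apply/submxP; exists (row_mx y z); rewrite /EH mul_row_col.
    by rewrite /g0 mulmxA -ey -eu subrK.
  + move=> hm0 i; have [s1 s2] := sg_spec hm0.
    apply: eq_ker_rows.
      rewrite /DH /EH mul_block_col mul0mx addr0 s2 /g0 mulmxA.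
      rewrite (exact_mul0 (ex10 hm0 i)) mul0mx addrC subrr col_mx0 //.
    move=> w; rewrite -(hsubmxK w) /EH mul_row_col => e.
    set y := lsubmx w in e *; set z := rsubmx w in e *.
    have ez : z *m e2 i = 0.
      have := congr1 (fun v => v *m pi i) e; rewrite /= mulmxDl mul0mx.
      rewrite /g0 !mulmxA -(mulmxA _ (io i)) (exact_mul0 (exm i)) mulmx0 add0r.
      by rewrite -mulmxA etau.
    have [z' ez'] := submxP (exact_sub (ex20 hm0 i) ez).
    have : ((y - z' *m sg 0 i) *m e1 i) *m io i = 0.
      rewrite -mulmxA -/(g0 i) mulmxBl -mulmxA s2 mulmxN (mulmxA z') -ez'.
      by rewrite opprK e.
    move/(mono0 (mio i)) => e'.
    have [y' ey'] := submxP (exact_sub (ex10 hm0 i) e').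
    apply/submxP; exists (row_mx y' z'); rewrite /DH mul_row_block mulmx0 add0r.
    by rewrite -ey' -ez' subrK.
- move=> k hk i; have [s1 s2] := sg_spec hk.
  apply: eq_ker_rows.
    rewrite /DH mulmx_block !mulmx0 !mul0mx !addr0 ?add0r (exact_mul0 (ex1 hk i)).
    rewrite (exact_mul0 (ex2 hk i)) s2 addrC subrr.
    by rewrite block_mx0.
  move=> w; rewrite -(hsubmxK w) /DH mul_row_block mulmx0 add0r => e.
  set y := lsubmx w in e *; set z := rsubmx w in e *.
  move: (e); rewrite -row_mx0 => /eq_row_mx [e1' e2'].
  have [z' ez'] := submxP (exact_sub (ex2 hk i) e2').
  have : (y - z' *m sg k.+1 i) *m d1 k i = 0.
    by rewrite mulmxBl -mulmxA s2 mulmxN (mulmxA z') -ez' opprK e1'.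
  move=> e'; have [y' ey'] := submxP (exact_sub (ex1 hk i) e').
  apply/submxP; exists (row_mx y' z'); rewrite mul_row_block mulmx0 add0r.
  by rewrite -ey' -ez' subrK.
- case: m hP1 hd1 ex10 ex1 mo1 hP2 hd2 ex20 ex2 mo2 sg_spec
    => [|m'] hP1' hd1' ex10' ex1' mo1' hP2' hd2' ex20' ex2' mo2' sgs i.
    apply: rowfree_of => w; rewrite -(hsubmxK w) /EH mul_row_col => e.
    set y := lsubmx w in e *; set z := rsubmx w in e *.
    have ez : z *m e2 i = 0.
      have := congr1 (fun v => v *m pi i) e; rewrite /= mulmxDl mul0mx.
      rewrite /g0 !mulmxA -(mulmxA _ (io i)) (exact_mul0 (exm i)) mulmx0 add0r.
      by rewrite -mulmxA etau.
    have z0 := mono0 (mo2' i) ez.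
    move: e; rewrite z0 mul0mx addr0 /g0 mulmxA => /(mono0 (mio i)) /(mono0 (mo1' i)) ->.
    by rewrite row_mx0.
  apply: rowfree_of => w; rewrite -(hsubmxK w) /DH mul_row_block mulmx0 add0r => e.
  set y := lsubmx w in e *; set z := rsubmx w in e *.
  move: (e); rewrite -row_mx0 => /eq_row_mx [e1' e2'].
  have z0 := mono0 (mo2' i) e2'.
  move: e1'; rewrite z0 mul0mx addr0 => /(mono0 (mo1' i)) ->.
  by rewrite row_mx0.
Qed.

End Horse.

Lemma ext_pdim (K : fieldType) n c (M1 M M2 : rep K) (io : Defs.hom M1 M) (pi : Defs.hom M M2) m :
  valid_rep n c M1 -> valid_rep n c M -> valid_rep n c M2 -> is_hom io -> is_hom pi ->
  mono io -> epi pi -> exact_at io pi -> pdim_le n c M1 m -> pdim_le n c M2 m ->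
  pdim_le n c M m.
Proof.
move=> vM1 vM vM2 hio hpi mio epi_pi exm.
case=> P1 [d1 [e1 [hP1 hd1 [he1 ee1 ex10] ex1 mo1]]].
case=> P2 [d2 [e2 [hP2 hd2 [he2 ee2 ex20] ex2 mo2]]].
have [tau [htau etau]] := proj2 (hP2 0%N (leq0n m)) _ _ _ e2 vM vM2 hpi epi_pi he2.
exact: (@horse_res K n c M1 M M2 io pi vM hio mio exm P1 d1 e1 P2 d2 e2 m
  hP1 hd1 he1 ee1 ex10 ex1 mo1 hP2 hd2 ee2 ex20 ex2 mo2 tau htau etau).
Qed.

End H.

Module I.
Import A B C D E F G H.
Import GRing.Theory.
Local Open Scope ring_scope.

Section Glob.
Variable K : fieldType.
Variables (n : nat) (c : nat -> nat).
Hypothesis hc : kupisch n c.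
Local Notation valid := (valid_rep n c).
Variable g : nat.
Hypothesis hg : forall j, (j < n)%N -> (Kd n c j - 1 <= g)%N.

Lemma zero_res (M : rep K) : (forall i, rdim M i = 0%N) -> pdim_le n c M 0.
Proof.
move=> hz; exists (fun _ => zrep K), (fun _ _ => 0), (fun _ => 0); split => //.
- by move=> k _; split; [apply: zrep_valid | apply: zrep_proj].
- split => //; first by move=> i; apply: mx_dim0.
  by move=> i; rewrite /row_full mxrank0 hz.
- by move=> i; apply: row_free0.
Qed.

Definition M1r (M : rep K) j : rep K :=
  @Rep K (fun i => if i == j then rdim M i else 0%N) (fun i => 0).
Definition M2r (M : rep K) j : rep K :=
  @Rep K (fun i => if (i < j)%N then rdim M i else 0%N)
    (fun i => (pid_mx (rdim M i) : 'M_(_, rdim M i)) *m rmap M i *m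
              (pid_mx (rdim M i.+1) : 'M_(rdim M i.+1, _))).

Lemma mid1 a b c' d e (X : 'M[K]_(a,b)) (R : 'M[K]_(b,c')) (L : 'M[K]_(c',b))
  (Y : 'M[K]_(b,d)) (Z : 'M[K]_(d,e)) :
  R *m L = 1%:M -> X *m R *m (L *m Y *m Z) = X *m Y *m Z.
Proof. by move=> h; rewrite !mulmxA -(mulmxA X) h mulmx1. Qed.

Lemma pathmx_M2 (M : rep K) j i k :
  pathmx (M2r M j) i k = (pid_mx (rdim M i) : 'M_(_, rdim M i)) *m pathmx M i k *m
    (pid_mx (rdim M (k + i)%N) : 'M_(rdim M (k + i)%N, rdim (M2r M j) (k + i)%N)).
Proof.
elim: k => [|k IH].
  rewrite /= mulmx1 mul_pid -pid_mx_1; apply: pid_eq; rewrite /= !add0n; arith.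
change (pathmx (M2r M j) i k *m rmap (M2r M j) (k + i)%N =
  (pid_mx (rdim M i) : 'M_(_, rdim M i)) *m (pathmx M i k *m rmap M (k + i)%N) *m
    (pid_mx (rdim M (k + i)%N.+1) : 'M_(rdim M (k + i)%N.+1, rdim (M2r M j) (k + i)%N.+1))).
rewrite IH /=.
case: (ltnP (k + i)%N j) => hk; last by apply: mx_dim0; arith.
rewrite mid1; first by rewrite !mulmxA.
rewrite mul_pid (@pid_eq _ _ _ _ (rdim M (k + i)%N)); last by arith.
by rewrite pid_mx_1.
Qed.

Lemma glob_b b : (b <= n)%N -> forall M : rep K, valid M ->
  (forall i, (b <= i)%N -> rdim M i = 0%N) -> pdim_le n c M g.
Proof.
elim: b => [|b IH] hb M vM hz.
  by apply: (pdim_le_mono (leq0n g)); apply: zero_res => i; apply: hz.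
set j := b.
have hj : (j < n)%N by [].
set M1 := M1r M j; set M2 := M2r M j.
pose io : Defs.hom M1 M := fun i => pid_mx (rdim M i).
pose pi : Defs.hom M M2 := fun i => pid_mx (rdim M i).
have hz' i : (j < i)%N -> rdim M i = 0%N by move=> h; apply: hz.
have vM1 : valid M1.
  split => i hi; first by rewrite /M1 /M1r /=; case: eqP => // e; lia.
  have := c_pos hc hi; case: (c i) => [|k] //= _.
  by rewrite mulmx0.
have vM2 : valid M2.
  case: vM => h1 h2; split => i hi; first by rewrite /M2 /M2r /= h1 //; case: ifP.
  by rewrite pathmx_M2 h2 // mulmx0 mul0mx.
have hN1 : forall i, i != j -> rdim M1 i = 0%N by move=> i /negPf; rewrite /= => ->.
apply: (@ext_pdim K n c M1 M M2 io pi).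
- exact: vM1.
- exact: vM.
- exact: vM2.
- move=> i; apply: mx_dim0; have := hz' i.+1; arith.
- move=> i; case: (ltnP i j) => hi.
    have E : (pid_mx (rdim M i) : 'M[K]_(rdim M i, rdim M2 i)) *m
      (pid_mx (rdim M i) : 'M[K]_(rdim M2 i, rdim M i)) = 1%:M.
      rewrite mul_pid (@pid_eq _ _ _ _ (rdim M i)) ?pid_mx_1 //; arith.
    by rewrite /pi /= !mulmxA E mul1mx.
  by apply: mx_dim0; rewrite /=; arith.
- by move=> i; apply: pid_free; rewrite /=; arith.
- by move=> i; apply: pid_full; rewrite /=; arith.
- move=> i; apply: pid_exact; have := hz' i; arith.
- apply: (pdim_le_mono (hg hj)).
  by apply: (conc_res hc hj hN1).
- by apply: IH => //; [lia | move=> i hi; rewrite /= ltnNge hi].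
Qed.

Lemma glob (M : rep K) : valid M -> pdim_le n c M g.
Proof.
move=> vM; apply: (@glob_b n (leqnn n)) => // i hi.
by case: vM => h _; apply: h.
Qed.

End Glob.

End I.

Import A B C D E F G H I.
Local Close Scope ring_scope.

Theorem lemma3p3 (K : closedFieldType) (n : nat) (c : nat -> nat)
  (hn : (0 < n)%N) (hc : kupisch n c) :
  (forall i, (i < n)%N ->
     has_pdim n c (simple_rep K i) (tdist n c i i.+1 - 1)) /\
  has_gldim K n c ((\max_(i < n) tdist n c i i.+1) - 1).
Proof.
have Kd_t i : i < n -> tdist n c i i.+1 = Kd n c i := tdist_Kd hc (i:=i).
have vS i : i < n -> valid_rep n c (simple_rep K i).
  move=> hi; split => k hk; first by rewrite /=; case: eqP => // e; subst; lia.
  have := c_pos hc hk; case: (c k) => [|k'] //= _.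
  by rewrite mulmx0.
have hNS i k : k != i -> rdim (simple_rep K i) k = 0 by move=> h; rewrite /= (negPf h).
have hDS i : 0 < rdim (simple_rep K i) i by rewrite /= eqxx.
split.
  move=> i hi; split.
    by rewrite Kd_t //; apply: (conc_res hc hi (hNS i)).
  by move=> m' h; rewrite Kd_t //; apply: (lower hc hi (vS i hi) (hNS i) (hDS i) h).
split.
  apply: glob => // j hj; rewrite -Kd_t //; apply: leq_sub2r.
  exact: (@leq_bigmax _ (fun i : 'I_n => tdist n c i i.+1) (Ordinal hj)).
move=> m' H.
have : \max_(i < n) tdist n c i i.+1 <= m'.+1.
  apply/bigmax_leqP => i _.
  have := lower hc (ltn_ord i) (vS i (ltn_ord i)) (hNS i) (hDS i) (H _ (vS i (ltn_ord i))).
  rewrite -Kd_t //; lia.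
lia.
Qed.
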